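(* Let $p$ be a prime, $q=p^m$, and $f:\mathbb{F}_q\to\mathbb{F}_p$ any function. The following are equivalent: (i) $f(ax)=f(x)$ for all $(a,x)\in\mathbb{F}_p^*\times\mathbb{F}_q$; (ii) $W_f(a\beta)=W_f(\beta)$ for all $(a,\beta)\in\mathbb{F}_p^*\times\mathbb{F}_q$; (iii) $aD_{f,i}=D_{f,i}$ for all $(a,i)\in\mathbb{F}_p^*\times\mathbb{F}_p$; (iv) $\chi_\beta(D_{f,i})$ is a rational integer for all $(i,\beta)\in\mathbb{F}_p\times\mathbb{F}_q$.
   Context: $\mathrm{Tr}$ is the absolute trace $\mathbb{F}_q\to\mathbb{F}_p$, $\zeta_p=e^{2\pi\sqrt{-1}/p}$, $W_f(\beta)=\sum_{x\in\mathbb{F}_q}\zeta_p^{f(x)-\mathrm{Tr}(\beta x)}$, $D_{f,i}=\{x\in\mathbb{F}_q:f(x)=i\}$, $aD=\{ad:d\in D\}$, and $\chi_\beta(D)=\sum_{\alpha\in D}\zeta_p^{\mathrm{Tr}(\beta\alpha)}$ for $D\subseteq\mathbb{F}_q$. *)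

(* Defs.v *)
From HB Require Import structures.
From mathcomp Require Import all_boot all_order all_algebra all_field.
Set Implicit Arguments. Unset Strict Implicit. Unset Printing Implicit Defensive.
Import Order.TTheory GRing.Theory Num.Theory.
Local Open Scope ring_scope.

Section Defs.
Variables (p m : nat) (F : finFieldType).

Definition emb (a : 'F_p) : F := (val a)%:R.

Definition trsum (x : F) : F := \sum_(i < m) x ^+ (p ^ i).

Definition Tr (x : F) : 'F_p := odflt 0 [pick k : 'F_p | emb k == trsum x].

(* zeta_p = e^(2 pi i / p) in algC:  p.-root(-1) = e^(i pi / p) *)
Definition zeta : algC := (p.-root (-1)) ^+ 2.

Definition zpow (k : 'F_p) : algC := zeta ^+ val k.

Definition Walsh (f : F -> 'F_p) (beta : F) : algC :=
  \sum_(x : F) zpow (f x - Tr (beta * x)).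

Definition Dfi (f : F -> 'F_p) (i : 'F_p) : {set F} := [set x | f x == i].

Definition scaleset (a : 'F_p) (D : {set F}) : {set F} := [set emb a * d | d in D].

Definition chi (beta : F) (D : {set F}) : algC :=
  \sum_(alpha in D) zpow (Tr (beta * alpha)).
End Defs.

(* Main.v *)
Require Import Defs.
From mathcomp Require Import all_boot all_order all_algebra all_field.
From mathcomp Require Import zify.
Import GRing.Theory Num.Theory.
Local Open Scope ring_scope.

Section Fp.
Variables (p : nat) (pP : prime p).
Lemma Fp_natr (a : 'F_p) : (val a)%:R = a.
Proof. exact: natr_Zp. Qed.
Lemma valFpD (a b : 'F_p) : val (a+b) = ((val a + val b) %% p)%N.
Proof. by rewrite -val_Fp_nat // natrD !Fp_natr. Qed.
Lemma valFpM (a b : 'F_p) : val (a*b) = ((val a * val b) %% p)%N.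
Proof. by rewrite -val_Fp_nat // natrM !Fp_natr. Qed.
Lemma valFp_lt (a : 'F_p) : (val a < p)%N.
Proof. by case: a => n; rewrite /= Fp_cast. Qed.
Lemma valFp1 : val (1 : 'F_p) = 1%N.
Proof. by have := val_Fp_nat pP 1; rewrite modn_small ?prime_gt1. Qed.
End Fp.

Section Main.
Variables (p m : nat) (F : finFieldType).
Hypotheses (pP : prime p) (charF : p \in [pchar F]) (cardF : #|F| = (p ^ m)%N).

Local Notation emb := (@emb p F).
Local Notation trsum := (@trsum p m F).
Local Notation Tr := (@Tr p m F).

Lemma p_gt1 : (1 < p)%N. Proof. exact: prime_gt1. Qed.
Lemma p_gt0 : (0 < p)%N. Proof. exact: prime_gt0. Qed.

Lemma m_gt0 : (0 < m)%N.
Proof.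
case: m cardF => // /= c; have := card_finRing_gt1 F; rewrite c; by [].
Qed.

Lemma emb0 : emb 0 = 0. Proof. by []. Qed.
Lemma emb1 : emb 1 = 1. Proof. by rewrite /emb valFp1. Qed.
Lemma embD a b : emb (a + b) = emb a + emb b.
Proof. by rewrite /emb valFpD // (GRing.natr_mod_pchar charF) natrD. Qed.
Lemma embM a b : emb (a * b) = emb a * emb b.
Proof. by rewrite /emb valFpM // (GRing.natr_mod_pchar charF) natrM. Qed.
Lemma emb_inj : injective emb.
Proof.
move=> a b E; apply: val_inj.
wlog le: a b E / (val a <= val b)%N.
  move=> W; case/orP: (leq_total (val a) (val b)) => h; first exact: W.
  by apply/esym/W.
have : (p %| val b - val a)%N.
  by rewrite (dvdn_pcharf charF) natrB // -/(emb b) -/(emb a) E subrr.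
have := valFp_lt _ pP b; have := valFp_lt _ pP a.
case: (posnP (val b - val a)) => [z _ _ _| pos _ lb /(dvdn_leq pos) h]; first by lia.
by lia.
Qed.
Lemma emb_eq0 a : (emb a == 0) = (a == 0).
Proof. by apply/eqP/eqP => [|->//]; rewrite -emb0 => /emb_inj. Qed.

Lemma pnat_pow i : [pchar F].-nat (p ^ i)%N.
Proof. by rewrite pnatX (eq_pnat _ (pcharf_eq charF)) pnat_id. Qed.

Lemma embX a i : emb a ^+ (p ^ i) = emb a.
Proof.
elim: i => [|i IH]; first by rewrite expr1.
rewrite expnSr exprM IH -pFrobenius_autE.
exact: (pFrobenius_aut_nat charF).
Qed.

Lemma trsumD x y : trsum (x + y) = trsum x + trsum y.
Proof.
rewrite /Defs.trsum -big_split /=; apply: eq_bigr => i _.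
exact: exprDn_pchar (pnat_pow i).
Qed.

Lemma trsumZ a x : trsum (emb a * x) = emb a * trsum x.
Proof.
rewrite /Defs.trsum mulr_sumr; apply: eq_bigr => i _.
by rewrite exprMn embX.
Qed.

Lemma trsum_frob x : trsum x ^+ p = trsum x.
Proof.
rewrite -pFrobenius_autE (rmorph_sum (pFrobenius_aut charF)) /Defs.trsum.
have m0 := m_gt0; case: m m0 cardF => // n _ c.
rewrite [LHS]big_ord_recr [RHS]big_ord_recl /= addrC.
congr (_ + _).
  by rewrite pFrobenius_autE -exprM -expnSr -c expf_card expn0 expr1.
by apply: eq_bigr => i _; rewrite pFrobenius_autE -exprM -expnSr.
Qed.

Lemma frob_fixed y : y ^+ p = y -> exists k, emb k = y.
Proof.
move=> yp; have [k /eqP ek|none] := pickP (fun k => emb k == y); first by exists k.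
exfalso.
pose P : {poly F} := 'X^p - 'X.
have szP : size P = p.+1.
  rewrite /P size_addl ?size_polyXn // size_opp size_polyX ltnS.
  exact: p_gt1.
have P0 : P != 0 by rewrite -size_poly_gt0 szP.
have := @max_poly_roots _ P (y :: [seq emb k | k <- enum 'F_p]) P0.
rewrite /= size_map -cardE card_Fp // szP ltnn.
move=> H; suff: false by []; apply: H.
  rewrite /root /P !hornerE yp subrr eqxx /=.
  apply/allP => z /mapP [k _ ->].
  rewrite !hornerE.
  have := embX k 1; rewrite expn1 => ->; by rewrite subrr.
rewrite map_inj_uniq ?enum_uniq ?andbT; last exact: emb_inj.
apply/negP; move/mapP => -[k _ ek]; have := none k; by rewrite ek eqxx.
Qed.

Lemma TrE x : emb (Tr x) = trsum x.
Proof.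
rewrite /Defs.Tr; case: pickP => [k /eqP //|none].
have [k ek] := frob_fixed _ (trsum_frob x).
by have := none k; rewrite ek eqxx.
Qed.

Lemma TrD x y : Tr (x + y) = Tr x + Tr y.
Proof. by apply: emb_inj; rewrite embD !TrE trsumD. Qed.
Lemma TrZ a x : Tr (emb a * x) = a * Tr x.
Proof. by apply: emb_inj; rewrite embM !TrE trsumZ. Qed.
Lemma Tr0 : Tr 0 = 0.
Proof. by apply: emb_inj; rewrite TrE emb0 /Defs.trsum big1 // => i _; rewrite expr0n expn_eq0; case: eqP => // h; move: p_gt0; rewrite h. Qed.
Lemma TrN x : Tr (- x) = - Tr x.
Proof. by apply/eqP; rewrite -addr_eq0 -TrD addNr Tr0. Qed.
Lemma TrB x y : Tr (x - y) = Tr x - Tr y.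
Proof. by rewrite TrD TrN. Qed.

Lemma Tr_nonzero : exists x, Tr x != 0.
Proof.
apply/existsP; apply: contraT; rewrite negb_exists => /forallP all0.
pose T : {poly F} := \sum_(i < m) 'X^(p ^ i).
have m0 := m_gt0.
have hT : T`_(p ^ m.-1) = 1.
  rewrite /T coef_sum (bigD1 (Ordinal (etrans (ltn_predL m) m0))) //= coefXn eqxx big1 ?addr0 //.
  move=> i ne; rewrite coefXn eqn_exp2l ?p_gt1 //.
  case: eqP => // e; move: ne; by rewrite -val_eqE /= e eqxx.
have T0 : T != 0 by apply/eqP => e; move: hT; rewrite e coef0 => /eqP; rewrite eq_sym oner_eq0.
have := @max_poly_roots _ T (enum F) T0.
rewrite -cardE cardF enum_uniq => H.
have : (p ^ m < size T)%N.
  apply: H => //; apply/allP => x _.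
  rewrite /root /T horner_sum.
  have := all0 x; rewrite negbK => /eqP Tx.
  have := TrE x; rewrite Tx emb0 /Defs.trsum => e.
  by apply/eqP; rewrite [RHS]e; apply: eq_bigr => i _; rewrite hornerXn.
move=> H2; suff: (size T <= p ^ m)%N by rewrite leqNgt H2.
apply: leq_trans (size_sum _ _ _) _.
apply/bigmax_leqP => i _; rewrite size_polyXn.
have : (p ^ i <= p ^ m.-1)%N by rewrite leq_exp2l ?p_gt1 // -ltnS prednK.
have : (p ^ m.-1 < p ^ m)%N by rewrite ltn_exp2l ?p_gt1 // prednK.
lia.
Qed.

Local Notation zeta := (@zeta p).
Local Notation zpow := (@zpow p).

Lemma zeta_neq1 : zeta != 1.
Proof.
rewrite /Defs.zeta; set r := p.-root (-1).
have rp : r ^+ p = -1 by rewrite /r rootCK // p_gt0.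
have r1 : r != 1.
  apply/eqP => e; move: rp; rewrite e expr1n => /eqP.
  by rewrite -subr_eq0 opprK (natrD _ 1 1 : (1 + 1 : algC) = 2%:R) pnatr_eq0.
have rm1 : r != -1.
  apply/eqP => e; have := @rootC_lt0 algC p (-1) p_gt1; rewrite -/r e ltrN10 //.
rewrite -subr_eq0 -[1](expr1n _ 2) subr_sqr mulf_neq0 //.
  by rewrite subr_eq0.
by rewrite -[1]opprK subr_eq0.
Qed.

Lemma zetap : zeta ^+ p = 1.
Proof.
rewrite /Defs.zeta -exprM mulnC exprM rootCK ?p_gt0 //.
by rewrite expr2 mulN1r opprK.
Qed.

Lemma zeta_prim : p.-primitive_root zeta.
Proof.
have [k pk kp] := prim_order_exists p_gt0 zetap.
have := prime_nt_dvdP pP _ kp.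
case: (k =P 1%N) => [e _|ne /(_ isT) e']; last by move: pk; rewrite e'.
by move: (prim_expr_order pk); rewrite e expr1 => /eqP; rewrite (negbTE zeta_neq1).
Qed.

Lemma zpow0 : zpow 0 = 1. Proof. by rewrite /Defs.zpow expr0. Qed.
Lemma zpowD a b : zpow (a + b) = zpow a * zpow b.
Proof. by rewrite /Defs.zpow valFpD // expr_mod ?zetap // exprD. Qed.
Lemma zpow_inj : injective zpow.
Proof.
move=> a b; rewrite /Defs.zpow => /eqP; rewrite (eq_prim_root_expr zeta_prim).
rewrite !modn_small ?valFp_lt // => /eqP; exact: val_inj.
Qed.
Lemma zpowB a b : zpow (a - b) * zpow b = zpow a.
Proof. by rewrite -zpowD subrK. Qed.
Lemma zpowM a b : zpow (a * b) = zeta ^+ (val a * val b).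
Proof. by rewrite /Defs.zpow valFpM // expr_mod ?zetap. Qed.

Lemma sum_zpow : \sum_(k : 'F_p) zpow k = 0.
Proof.
set S := \sum_k _.
have : S = zeta * S.
  rewrite {1}/S (reindex_inj (addIr (1 : 'F_p))) /= mulr_sumr.
  by apply: eq_bigr => k _; rewrite zpowD mulrC /Defs.zpow valFp1 // expr1.
move/eqP; rewrite -{1}[S]mul1r -subr_eq0 -mulrBl mulf_eq0 subr_eq0 eq_sym.
by rewrite (negbTE zeta_neq1) => /eqP.
Qed.

Lemma orth z : \sum_(b : F) zpow (Tr (b * z)) = if z == 0 then #|F|%:R else 0.
Proof.
case: eqP => [->|nz].
  under eq_bigr do rewrite mulr0 Tr0 zpow0.
  by rewrite sumr_const.
have nz' : z != 0 by apply/eqP.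
rewrite (reindex_inj (mulIf (invr_neq0 nz'))) /=.
under eq_bigr do rewrite divfK //.
set S := \sum_b _.
have [x0 hx0] := Tr_nonzero.
have : S = S * zpow (Tr x0).
  rewrite {1}/S (reindex_inj (addIr x0)) /= mulr_suml.
  by apply: eq_bigr => b _; rewrite TrD zpowD.
move/eqP; rewrite -{1}[S]mulr1 -subr_eq0 -mulrBr mulf_eq0 subr_eq0.
case/orP => [/eqP //|/eqP e].
by move: hx0; rewrite -zpow0 in e; rewrite -(zpow_inj _ _ e) eqxx.
Qed.

Definition hat (h : F -> algC) (b : F) : algC := \sum_(x : F) h x * zpow (Tr (b * x)).

Lemma inversion h y :
  \sum_(b : F) hat h b * zpow (- Tr (b * y)) = #|F|%:R * h y.
Proof.
rewrite /hat.
under eq_bigr do rewrite mulr_suml.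
rewrite exchange_big /=.
under eq_bigr => x _ do under eq_bigr => b _ do rewrite -mulrA -zpowD -TrB -mulrBr.
under eq_bigr => x _ do rewrite -mulr_sumr orth.
rewrite (bigD1 y) // subrr eqxx big1; first by rewrite /= addr0 mulrC.
by move=> x ne; rewrite subr_eq0 (negbTE ne) mulr0.
Qed.

Lemma card_neq0 : (#|F|%:R : algC) != 0.
Proof. by rewrite pnatr_eq0 cardF expn_eq0 negb_and; apply/orP; left; rewrite -lt0n p_gt0. Qed.

Lemma invariance h c : c != 0 -> (forall b, hat h (c * b) = hat h b) ->
  forall y, h (c * y) = h y.
Proof.
move=> cnz H y; apply: (mulfI card_neq0).
rewrite -!inversion (reindex_inj (mulfI (invr_neq0 cnz))) /=.
apply: eq_bigr => b _.
rewrite -{1}(H (c^-1 * b)) mulVKf //.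
by rewrite [c^-1 * b * (c * y)]mulrCA -mulrA mulVKf.
Qed.

Variable f : F -> 'F_p.
Local Notation c a := (emb a).
Definition P0 := forall (a : 'F_p) (x : F), a != 0 -> f (emb a * x) = f x.

Lemma c_nz a : a != 0 -> emb a != 0.
Proof. by rewrite emb_eq0. Qed.
Arguments c_nz [a].

Lemma P0_inv (H : P0) a x : a != 0 -> f ((emb a)^-1 * x) = f x.
Proof. by move=> anz; rewrite -{2}(mulVKf (c_nz anz) x) H. Qed.

Lemma P0_P1 : P0 -> forall (a : 'F_p) (b : F), a != 0 ->
         @Walsh p m F f (emb a * b) = @Walsh p m F f b.
Proof.
move=> H a b anz; have cnz := c_nz anz; rewrite /Walsh.
rewrite [LHS](reindex_inj (mulfI (invr_neq0 cnz))) /=.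
apply: eq_bigr => x _.
rewrite P0_inv //.
by rewrite -mulrA [b * _]mulrCA mulVKf.
Qed.

Definition hf (x : F) : algC := zpow (f x).

Lemma W_hat b : @Walsh p m F f b = hat hf (- b).
Proof.
rewrite /Walsh /hat; apply: eq_bigr => x _.
by rewrite /hf -zpowD mulNr TrN.
Qed.

Lemma P1_P0 : (forall (a : 'F_p) (b : F), a != 0 ->
         @Walsh p m F f (emb a * b) = @Walsh p m F f b) -> P0.
Proof.
move=> H a x anz; have cnz := c_nz anz.
apply: zpow_inj; rewrite -/(hf _) -/(hf x).
apply: invariance cnz _ x => b.
by rewrite -[b in RHS]opprK -[c a * b]opprK -!W_hat -mulrN H.
Qed.

Lemma P0_P2 : P0 -> forall (a i : 'F_p), a != 0 ->
    @scaleset p F a (@Dfi p F f i) = @Dfi p F f i.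
Proof.
move=> H a i anz; apply/setP => x; rewrite /scaleset /Dfi inE.
apply/imsetP/idP => [[d] |fx].
  by rewrite inE => dD ->; rewrite H.
exists ((emb a)^-1 * x); last by rewrite mulVKf // c_nz.
by rewrite inE P0_inv.
Qed.

Lemma P2_P0 : (forall (a i : 'F_p), a != 0 ->
    @scaleset p F a (@Dfi p F f i) = @Dfi p F f i) -> P0.
Proof.
move=> H a x anz; move: (H a (f x) anz) => /setP /(_ (emb a * x)).
rewrite /scaleset /Dfi inE mem_imset ?inE //.
  by rewrite eqxx => /esym/eqP.
exact: mulfI (c_nz anz).
Qed.

Lemma P0_P3 : P0 -> forall (i : 'F_p) (b : F), @chi p m F b (@Dfi p F f i) \is a Num.int.
Proof.
move=> H i b; set D := Dfi f i.
pose N k := (\sum_(x | (x \in D) && (Tr (b * x)%R == k)) 1)%N.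
have NE k : k != 0 -> N k = N 1.
  move=> knz; rewrite /N (reindex_inj (mulfI (c_nz knz))) /=.
  apply: eq_bigl => x; rewrite /D /Dfi !inE H //.
  rewrite mulrCA TrZ -{2}[k]mulr1 (inj_eq (mulfI knz)) //.
rewrite /chi (partition_big (fun x => Tr (b * x)) predT) //=.
have inner k : \sum_(x | (x \in D) && (Tr (b * x) == k)) zpow (Tr (b * x)) = (N k)%:R * zpow k.
  rewrite (eq_bigr (fun _ => 1%:R * zpow k)); last by move=> x /andP[_ /eqP ->]; rewrite mul1r.
  by rewrite -mulr_suml /N natr_sum.
under eq_bigr do rewrite inner.
rewrite (bigD1 0) //= zpow0 mulr1.
under eq_bigr => k kn0 do rewrite NE //.
rewrite -mulr_sumr.
have : \sum_(k | k != 0) zpow k = -1.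
  by have := sum_zpow; rewrite (bigD1 0) //= zpow0 => /eqP; rewrite addrC addr_eq0 => /eqP.
move=> ->; rewrite mulrN1.
by rewrite rpredB // rpred_nat.
Qed.

Lemma P3_P0 : (forall (i : 'F_p) (b : F), @chi p m F b (@Dfi p F f i) \is a Num.int) -> P0.
Proof.
move=> H a y anz; have cnz := c_nz anz.
set D := Dfi f (f y).
pose h x : algC := (x \in D)%:R.
have hatE b : hat h b = @chi p m F b D.
  rewrite /hat /chi [RHS]big_mkcond /=.
  under eq_bigr => x _ do rewrite mulr_natl mulrb.
  by [].
have cop : coprime (val a) p.
  rewrite coprime_sym prime_coprime //; apply/negP => /dvdn_leq.
  have : val a != 0%N by move: anz; apply: contra => /eqP e; apply/eqP/val_inj.
  have := valFp_lt _ pP a; rewrite -lt0n => lt pos /(_ pos); lia.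
have [nu hnu] := Qn_aut_exists cop.
have hinv b : hat h (emb a * b) = hat h b.
  rewrite !hatE.
  have := H (f y) b; rewrite intrEfloor => /eqP e.
  rewrite -[RHS]e -(rmorph_int nu) e /chi rmorph_sum; apply: eq_bigr => x _.
  rewrite -mulrA TrZ zpowM hnu /Defs.zpow; first by rewrite [LHS]exprM exprAC.
  by rewrite exprAC zetap expr1n.
have := invariance h _ cnz hinv y.
rewrite /h (_ : y \in D); last by rewrite inE.
case: (emb a * y \in D) / boolP => [|_ /eqP]; last by rewrite eq_sym oner_eq0.
by rewrite inE => /eqP.
Qed.

Lemma main_tfae :
  [<-> forall (a : 'F_p) (x : F), a != 0 -> f (emb a * x) = f x;
       forall (a : 'F_p) (beta : F), a != 0 ->
         @Walsh p m F f (emb a * beta) = @Walsh p m F f beta;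
       forall (a i : 'F_p), a != 0 -> @scaleset p F a (@Dfi p F f i) = @Dfi p F f i;
       forall (i : 'F_p) (beta : F), @chi p m F beta (@Dfi p F f i) \is a Num.int].
Proof.
tfae.
- exact: P0_P1.
- by move=> H; apply: P0_P2; apply: P1_P0.
- by move=> H; apply: P0_P3; apply: P2_P0.
- exact: P3_P0.
Qed.

End Main.

Theorem lemma4p4 (p m : nat) (F : finFieldType) (f : F -> 'F_p) :
  prime p -> p \in [pchar F] -> #|F| = (p ^ m)%N ->
  [<-> forall (a : 'F_p) (x : F), a != 0 -> f (@emb p F a * x) = f x;
       forall (a : 'F_p) (beta : F), a != 0 ->
         @Walsh p m F f (@emb p F a * beta) = @Walsh p m F f beta;
       forall (a i : 'F_p), a != 0 -> @scaleset p F a (@Dfi p F f i) = @Dfi p F f i;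
       forall (i : 'F_p) (beta : F), @chi p m F beta (@Dfi p F f i) \is a Num.int].
Proof. by move=> pP charF cardF; apply: main_tfae. Qed.
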